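(* There is no countable right-ordered group $U$ such that every finitely generated totally ordered abelian group admits an order-embedding into $U$. Consequently there is no countable right-ordered group into which every finitely generated right-ordered group order-embeds.
   Context: A right-ordered group is a group with a total order $\le$ such that $x\le y$ implies $xz\le yz$ for all $x,y,z$. A totally ordered group additionally satisfies $x\le y\Rightarrow zx\le zy$. An order-embedding is an injective group homomorphism that preserves the order. *)

(* Defs.v *)
From Stdlib Require Import List.

Record RightOrderedGroup := {
  rog_carrier :> Type;
  rog_mul : rog_carrier -> rog_carrier -> rog_carrier;
  rog_one : rog_carrier;
  rog_inv : rog_carrier -> rog_carrier;
  rog_le : rog_carrier -> rog_carrier -> Prop;
  rog_mulA : forall x y z, rog_mul x (rog_mul y z) = rog_mul (rog_mul x y) z;
  rog_mul1 : forall x, rog_mul rog_one x = x;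
  rog_mulV : forall x, rog_mul (rog_inv x) x = rog_one;
  rog_le_refl : forall x, rog_le x x;
  rog_le_antisym : forall x y, rog_le x y -> rog_le y x -> x = y;
  rog_le_trans : forall x y z, rog_le x y -> rog_le y z -> rog_le x z;
  rog_le_total : forall x y, rog_le x y \/ rog_le y x;
  rog_le_mulr : forall x y z, rog_le x y -> rog_le (rog_mul x z) (rog_mul y z)
}.

Definition totally_ordered (G : RightOrderedGroup) : Prop :=
  forall x y z : G, rog_le G x y -> rog_le G (rog_mul G z x) (rog_mul G z y).

Definition abelian (G : RightOrderedGroup) : Prop :=
  forall x y : G, rog_mul G x y = rog_mul G y x.

Inductive generated (G : RightOrderedGroup) (s : list G) : G -> Prop :=
  | gen_elem : forall x, In x s -> generated G s x
  | gen_one : generated G s (rog_one G)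
  | gen_mul : forall x y, generated G s x -> generated G s y ->
      generated G s (rog_mul G x y)
  | gen_inv : forall x, generated G s x -> generated G s (rog_inv G x).

Definition finitely_generated (G : RightOrderedGroup) : Prop :=
  exists s : list G, forall x : G, generated G s x.

Definition countable (G : RightOrderedGroup) : Prop :=
  exists f : G -> nat, forall x y, f x = f y -> x = y.

Definition order_embedding (G H : RightOrderedGroup) (f : G -> H) : Prop :=
  (forall x y, f x = f y -> x = y) /\
  (forall x y, f (rog_mul G x y) = rog_mul H (f x) (f y)) /\
  (forall x y, rog_le G x y -> rog_le H (f x) (f y)).

Definition order_embeds (G H : RightOrderedGroup) : Prop :=
  exists f : G -> H, order_embedding G H f.

(* Main.v *)
Require Import Defs.
From Stdlib Require Import Reals Lra Lia ZArith List Cantor IndefiniteDescription Runcountable FinFun.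

Section GroupFacts.
Variable U : RightOrderedGroup.
Local Notation "x * y" := (rog_mul U x y).
Lemma rog_mulVr (x : U) : x * rog_inv U x = rog_one U.
Proof.
  set (y := rog_inv U x).
  transitivity ((rog_inv U y * y) * (x * y)).
  { rewrite rog_mulV, rog_mul1; reflexivity. }
  transitivity (rog_inv U y * ((y * x) * y)).
  { rewrite <- !rog_mulA; reflexivity. }
  unfold y at 2. rewrite rog_mulV, rog_mul1, rog_mulV. reflexivity.
Qed.
Lemma rog_mul1r (x : U) : x * rog_one U = x.
Proof.
  rewrite <- (rog_mulV U x), rog_mulA, rog_mulVr, rog_mul1. reflexivity.
Qed.
Lemma rog_cancel_r (a b c : U) : a * c = b * c -> a = b.
Proof.
  intro H. rewrite <- (rog_mul1r a), <- (rog_mul1r b), <- (rog_mulVr c), !rog_mulA, H.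
  reflexivity.
Qed.
End GroupFacts.

Lemma emb_reflect (G U : RightOrderedGroup) (f : G -> U) :
  order_embedding G U f -> forall x y, rog_le U (f x) (f y) -> rog_le G x y.
Proof.
  intros [Hi [Hm Hl]] x y H.
  destruct (rog_le_total G x y) as [H1|H1]; [exact H1|].
  pose proof (Hl _ _ H1) as H2.
  pose proof (rog_le_antisym U _ _ H H2) as H3.
  rewrite (Hi _ _ H3). apply rog_le_refl.
Qed.

Lemma hom_one (G U : RightOrderedGroup) (f : G -> U) :
  (forall x y, f (rog_mul G x y) = rog_mul U (f x) (f y)) -> f (rog_one G) = rog_one U.
Proof.
  intro Hm. symmetry. apply (rog_cancel_r U _ _ (f (rog_one G))).
  rewrite rog_mul1, <- Hm, rog_mul1. reflexivity.
Qed.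

Open Scope Z_scope.
Definition zmul (p q : Z * Z) : Z * Z := (fst p + fst q, snd p + snd q).
Definition zinv (p : Z * Z) : Z * Z := (- fst p, - snd p).
Definition key (al : R) (p : Z * Z) : R := (IZR (fst p) + IZR (snd p) * al)%R.
Definition zle (al : R) (p q : Z * Z) : Prop :=
  (key al p < key al q)%R \/ (key al p = key al q /\ snd p <= snd q).

Lemma key_mul al p q : key al (zmul p q) = (key al p + key al q)%R.
Proof. destruct p, q; unfold key, zmul; simpl; rewrite !plus_IZR; ring. Qed.

Lemma zle_antisym al p q : zle al p q -> zle al q p -> p = q.
Proof.
  destruct p as [a b], q as [c d]; unfold zle; intros H1 H2.
  assert (E : key al (a,b) = key al (c,d) /\ b = d).
  { destruct H1 as [H1|[H1 H1']], H2 as [H2|[H2 H2']]; simpl in *;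
      try (exfalso; lra); split; auto; lia. }
  destruct E as [E1 E2]. subst d. unfold key in E1; simpl in E1.
  assert (IZR a = IZR c) by lra. apply eq_IZR in H. subst; reflexivity.
Qed.

Lemma zle_trans al p q r : zle al p q -> zle al q r -> zle al p r.
Proof.
  unfold zle; intros [H1|[H1 H1']] [H2|[H2 H2']].
  - left; lra. - left; lra. - left; lra. - right; split; [lra|lia].
Qed.

Lemma zle_total al p q : zle al p q \/ zle al q p.
Proof.
  unfold zle. destruct (Rtotal_order (key al p) (key al q)) as [H|[H|H]].
  - left; left; exact H.
  - destruct (Z.le_ge_cases (snd p) (snd q)); [left|right]; right; split; auto; lia.
  - right; left; exact H.
Qed.

Lemma zle_mulr al p q r : zle al p q -> zle al (zmul p r) (zmul q r).
Proof.
  unfold zle; rewrite !key_mul; intros [H|[H H']]; [left; lra| right; split; [lra|]].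
  destruct p, q, r; simpl in *; lia.
Qed.

Definition Gal (al : R) : RightOrderedGroup.
Proof.
  refine {| rog_carrier := Z * Z; rog_mul := zmul; rog_one := (0,0); rog_inv := zinv;
            rog_le := zle al |}.
  - intros [] [] []; unfold zmul; simpl; f_equal; ring.
  - intros []; reflexivity.
  - intros []; unfold zmul, zinv; simpl; f_equal; ring.
  - intros; right; split; [reflexivity| lia].
  - apply zle_antisym.
  - apply zle_trans.
  - apply zle_total.
  - apply zle_mulr.
Defined.

Lemma Gal_ab al : abelian (Gal al).
Proof. intros [] []; simpl; unfold zmul; simpl; f_equal; ring. Qed.

Lemma Gal_to al : totally_ordered (Gal al).
Proof.
  intros x y z H. rewrite (Gal_ab al z x), (Gal_ab al z y). apply zle_mulr; auto.
Qed.

Lemma Gal_fg al : finitely_generated (Gal al).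
Proof.
  exists ((1,0) :: (0,1) :: nil).
  assert (HA : forall a, generated (Gal al) ((1,0) :: (0,1) :: nil) (a,0)).
  { intro a. induction a using Z.peano_ind.
    - apply gen_one.
    - replace (Z.succ a, 0) with (zmul (a,0) (1,0)) by (unfold zmul; simpl; f_equal; lia).
      apply (gen_mul (Gal al)); auto. apply gen_elem; simpl; auto.
    - replace (Z.pred a, 0) with (zmul (a,0) (zinv (1,0))) by (unfold zmul; simpl; f_equal; lia).
      apply (gen_mul (Gal al)); auto. apply (gen_inv (Gal al)). apply gen_elem; simpl; auto. }
  assert (HB : forall b, generated (Gal al) ((1,0) :: (0,1) :: nil) (0,b)).
  { intro b. induction b using Z.peano_ind.
    - apply gen_one.
    - replace (0, Z.succ b) with (zmul (0,b) (0,1)) by (unfold zmul; simpl; f_equal; lia).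
      apply (gen_mul (Gal al)); auto. apply gen_elem; simpl; auto.
    - replace (0, Z.pred b) with (zmul (0,b) (zinv (0,1))) by (unfold zmul; simpl; f_equal; lia).
      apply (gen_mul (Gal al)); auto. apply (gen_inv (Gal al)). apply gen_elem; simpl; auto. }
  intros [a b]. replace (a,b) with (zmul (a,0) (0,b)) by (unfold zmul; simpl; f_equal; lia).
  apply (gen_mul (Gal al)); auto.
Qed.

Lemma hom_agree (al be : R) (U : RightOrderedGroup) (f : Gal al -> U) (h : Gal be -> U) :
  (forall x y, f (rog_mul (Gal al) x y) = rog_mul U (f x) (f y)) ->
  (forall x y, h (rog_mul (Gal be) x y) = rog_mul U (h x) (h y)) ->
  f (1,0) = h (1,0) -> f (0,1) = h (0,1) -> forall p : Z * Z, f p = h p.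
Proof.
  intros Hf Hh E1 E2.
  assert (F1 : f (0,0) = rog_one U) by exact (hom_one _ _ f Hf).
  assert (H1 : h (0,0) = rog_one U) by exact (hom_one _ _ h Hh).
  assert (Mul : forall p q, f p = h p -> f q = h q -> f (zmul p q) = h (zmul p q)).
  { intros p q Ep Eq. change (f (rog_mul (Gal al) p q) = h (rog_mul (Gal be) p q)).
    rewrite Hf, Hh, Ep, Eq; reflexivity. }
  assert (Inv : forall p, f p = h p -> f (zinv p) = h (zinv p)).
  { intros p Ep. apply (rog_cancel_r U _ _ (f p)).
    change (rog_mul U (f (zinv p)) (f p) = rog_mul U (h (zinv p)) (f p)).
    rewrite Ep at 2.
    rewrite <- Hf, <- Hh.
    change (f (zmul (zinv p) p) = h (zmul (zinv p) p)).
    replace (zmul (zinv p) p) with (0,0) by (destruct p; unfold zmul, zinv; simpl; f_equal; ring).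
    rewrite F1, H1; reflexivity. }
  assert (HA : forall a, f (a,0) = h (a,0)).
  { intro a. induction a using Z.peano_ind.
    - rewrite F1, H1; reflexivity.
    - replace (Z.succ a, 0) with (zmul (a,0) (1,0)) by (unfold zmul; simpl; f_equal; lia).
      apply Mul; auto.
    - replace (Z.pred a, 0) with (zmul (a,0) (zinv (1,0))) by (unfold zmul; simpl; f_equal; lia).
      apply Mul; auto. }
  assert (HB : forall b, f (0,b) = h (0,b)).
  { intro b. induction b using Z.peano_ind.
    - rewrite F1, H1; reflexivity.
    - replace (0, Z.succ b) with (zmul (0,b) (0,1)) by (unfold zmul; simpl; f_equal; lia).
      apply Mul; auto.
    - replace (0, Z.pred b) with (zmul (0,b) (zinv (0,1))) by (unfold zmul; simpl; f_equal; lia).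
      apply Mul; auto. }
  intros [a b]. replace (a,b) with (zmul (a,0) (0,b)) by (unfold zmul; simpl; f_equal; lia).
  apply Mul; auto.
Qed.

Lemma separate (al be : R) : (al < be)%R ->
  exists p : Z * Z, ~ zle al (0,0) p /\ zle be (0,0) p.
Proof.
  intro Hlt.
  destruct (archimed (/ (be - al))) as [Hq1 _].
  set (q := up (/ (be - al))) in *.
  assert (Hinv : (0 < / (be - al))%R) by (apply Rinv_0_lt_compat; lra).
  assert (Hq : (1 < IZR q * (be - al))%R).
  { assert (IZR q * (be - al) > / (be - al) * (be - al))%R.
    { apply Rmult_gt_compat_r; lra. }
    rewrite Rinv_l in H; lra. }
  destruct (archimed (IZR q * al)) as [Hp1 Hp2].
  set (p := up (IZR q * al)) in *.
  exists (- p, q). unfold zle, key; simpl. rewrite opp_IZR.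
  split.
  - intros [H|[H _]]; lra.
  - left. nra.
Qed.
Lemma main_part (NoInj : forall g : R -> nat, (forall x y, g x = g y -> x = y) -> False) :
  ~ exists U : RightOrderedGroup, countable U /\
       forall G : RightOrderedGroup,
         finitely_generated G -> totally_ordered G -> abelian G ->
         order_embeds G U.
Proof.
  intros [U [[c Hc] HU]].
  assert (F : forall al, {f : Gal al -> U | order_embedding (Gal al) U f}).
  { intro al. apply constructive_indefinite_description.
    apply HU; [apply Gal_fg|apply Gal_to|apply Gal_ab]. }
  apply (NoInj (fun al => to_nat (c (proj1_sig (F al) (1,0)), c (proj1_sig (F al) (0,1))))).
  intros al be E.
  apply (f_equal of_nat) in E; rewrite !cancel_of_to in E. injection E as E1 E2.
  apply Hc in E1. apply Hc in E2.
  destruct (F al) as [f Hf], (F be) as [h Hh]; simpl in *.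
  assert (A := hom_agree al be U f h (proj1 (proj2 Hf)) (proj1 (proj2 Hh)) E1 E2).
  destruct (Rtotal_order al be) as [L|[L|L]]; auto; exfalso.
  - destruct (separate al be L) as [p [N P]]. apply N.
    apply (emb_reflect (Gal al) U f Hf (0,0) p). rewrite !A. apply (proj2 (proj2 Hh)); exact P.
  - destruct (separate be al L) as [p [N P]]. apply N.
    apply (emb_reflect (Gal be) U h Hh (0,0) p). rewrite <- !A. apply (proj2 (proj2 Hf)); exact P.
Qed.

Lemma main_all (NoInj : forall g : R -> nat, (forall x y, g x = g y -> x = y) -> False) :
  (~ exists U : RightOrderedGroup, countable U /\
       forall G : RightOrderedGroup,
         finitely_generated G -> totally_ordered G -> abelian G ->
         order_embeds G U) /\
  (~ exists U : RightOrderedGroup, countable U /\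
       forall G : RightOrderedGroup,
         finitely_generated G -> order_embeds G U).
Proof.
  split; [apply main_part; exact NoInj|].
  intros [U [Hc HU]]. apply (main_part NoInj). exists U; split; auto.
Qed.

From mathcomp Require Import all_boot all_algebra all_classical all_reals.
From mathcomp Require Import Rstruct Rstruct_topology.
Local Open Scope card_scope.
Lemma no_inj_R (g : R -> nat) : (forall x y, g x = g y -> x = y) -> False.
Proof.
move=> ginj.
have h1 : [set: R] #<= [set: nat].
  by apply/countable_injP; exists g => x y _ _; apply: ginj.
have h2 : [set: nat] #<= [set: R].
  apply/pcard_leP; apply/injfunPex; exists INR => // x y _ _; apply: INR_eq.
have := Cantor_Bernstein h2 h1.
case/ppcard_eqP => f.
apply: (R_uncountable f).
exists (f^-1)%FUN; split=> x.
- by rewrite (funK (in_setT x)).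
- by rewrite (invK (in_setT x)).
Qed.

Import Defs.
Theorem mainTheorem2 :
  (~ exists U : RightOrderedGroup, countable U /\
       forall G : RightOrderedGroup,
         finitely_generated G -> totally_ordered G -> abelian G ->
         order_embeds G U) /\
  (~ exists U : RightOrderedGroup, countable U /\
       forall G : RightOrderedGroup,
         finitely_generated G -> order_embeds G U).
Proof. exact (main_all no_inj_R). Qed.
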